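(* Let $\mathcal X$ be the standard Borel space of countable irreflexive graphs with vertex set $\omega$ having no isolated vertices, and $\mathcal Y$ the standard Borel space of countable pointed reflexive graphs. There is a Borel map $F\colon\mathcal X\to\mathcal Y$ such that for all $\Gamma,\Delta\in\mathcal X$: $$\Gamma\preccurlyeq_1\Delta \iff F(\Gamma)\twoheadleftarrow F(\Delta).$$ Explicitly one may take, for $\Gamma=(V,R_\Gamma)$, $F(\Gamma)$ to be the graph on $V\cup\{c\}$ ($c$ a new vertex, the distinguished vertex) with edge set $(V^2\setminus R_\Gamma)\cup(\{c\}\times V)\cup(V\times\{c\})\cup\{(c,c)\}$. Consequently (using that $\preccurlyeq_1$ on $\mathcal X$ is a complete analytic quasi-order), the relation $\twoheadleftarrow$ on countable pointed reflexive graphs is a complete analytic quasi-order.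
   Context: A graph is $(V,R)$ with $R\subseteq V^2$ symmetric and irreflexive; a reflexive graph is $(V,R)$ with $R$ symmetric and $(a,a)\in R$ for all $a\in V$. A homomorphism $f\colon(V_\Gamma,R_\Gamma)\to(V_\Delta,R_\Delta)$ is a map $V_\Gamma\to V_\Delta$ with $(a,b)\in R_\Gamma\Rightarrow (f(a),f(b))\in R_\Delta$. For graphs, $\Gamma\preccurlyeq_1\Delta$ means there is an injective homomorphism from $\Gamma$ to $\Delta$. A pointed reflexive graph $\Gamma_c$ is a (possibly empty) reflexive graph $\Gamma$ together with an extra distinguished vertex $c$ (named by a constant) adjacent to every vertex, including itself. A homomorphism of pointed reflexive graphs is a homomorphism of reflexive graphs sending distinguished vertex to distinguished vertex. For pointed reflexive graphs, $\Gamma_c\twoheadleftarrow\Delta_c$ means there is a surjective homomorphism (of pointed reflexive graphs) from $\Delta_c$ onto $\Gamma_c$. A complete analytic quasi-order on a standard Borel space $Y$ is an analytic quasi-order $Q$ such that every analytic quasi-order $P$ on a standard Borel space $X$ Borel reduces to it: there is a Borel $f\colon X\to Y$ with $xPx'\iff f(x)Qf(x')$. *)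

(* Defs.v *)
From mathcomp Require Import all_boot all_order.
From mathcomp Require Import boolp classical_sets measurable_structure.
Set Implicit Arguments. Unset Strict Implicit. Unset Printing Implicit Defensive.
Local Open Scope classical_set_scope.

(** Ambient Cantor space 2^(omega x omega): binary relations on omega,
    with its Borel sigma-algebra = sigma-algebra generated by the basic
    cylinders [R n m = b] (product topology of the Cantor space). *)
Definition cspace := nat -> nat -> bool.

Definition cylinders : set (set cspace) :=
  [set A | exists (n m : nat) (b : bool), A = [set R : cspace | R n m = b]].

Definition borel_set (A : set cspace) : Prop := <<s cylinders>> A.

Definition borel_map (F : cspace -> cspace) : Prop :=
  forall A, borel_set A -> borel_set (F @^-1` A).

Definition in_X (R : cspace) : Prop :=
  (forall n m, R n m = R m n) /\ (forall n, R n n = false) /\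
  (forall n, exists m, R n m).

(** S codes the reflexive
    graph Gamma on the vertex set V = {n | S n n} (a subset of omega, possibly
    finite or empty); the distinguished vertex c (= None below) is added and
    is adjacent to every vertex including itself. *)
Definition in_Y (S : cspace) : Prop :=
  (forall n m, S n m = S m n) /\ (forall n m, S n m -> S n n).

Definition pvtx (S : cspace) (v : option nat) : bool :=
  match v with None => true | Some n => S n n end.

Definition padj (S : cspace) (u v : option nat) : bool :=
  match u, v with
  | Some a, Some b => S a b
  | _, _ => true
  end.

Definition embeds1 (R R' : cspace) : Prop :=
  exists f : nat -> nat, injective f /\
    (forall a b, R a b -> R' (f a) (f b)).

(** psurj S S' : there is a surjective homomorphism of pointed reflexive
    graphs from (coded) S'_c onto S_c, i.e. S_c <<-- S'_c. *)
Definition psurj (S S' : cspace) : Prop :=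
  exists h : option nat -> option nat,
    h None = None /\
    (forall v, pvtx S' v -> pvtx S (h v)) /\
    (forall u v, pvtx S' u -> pvtx S' v -> padj S' u v -> padj S (h u) (h v)) /\
    (forall w, pvtx S w -> exists v, pvtx S' v /\ h v = w).

(** In the coding of Y the
    non-distinguished part is the relation ~~ R (its diagonal is all true
    because R is irreflexive, so the vertex set is all of omega). *)
Definition Fmap (R : cspace) : cspace := fun n m => ~~ R n m.

(* Main.v *)
Require Import Defs.
From mathcomp Require Import all_boot all_order.
From mathcomp Require Import boolp classical_sets measurable_structure.
Local Open Scope classical_set_scope.

Lemma borel_Fmap : borel_map Fmap.
Proof.
move=> A hA.
pose X := [set B : set cspace | borel_set (Fmap @^-1` B)].
have sX : sigma_algebra setT X.
  split.
  - by rewrite /X /= preimage_set0; exact: sigma_algebra0.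
  - move=> B; rewrite /X /= => hB.
    have -> : Fmap @^-1` (setT `\` B) = setT `\` Fmap @^-1` B.
      by apply/seteqP; split=> x /=.
    exact: sigma_algebraCD.
  - move=> F hF; rewrite /X /= preimage_bigcup.
    exact: sigma_algebra_bigcup.
have cX : cylinders `<=` X.
  move=> B [n [m [b ->]]]; rewrite /X /=.
  have -> : Fmap @^-1` [set R : cspace | R n m = b] = [set R : cspace | R n m = ~~ b].
    apply/seteqP; split=> x /=; rewrite /Fmap; by case: (x n m); case: b.
  apply: sub_gen_smallest; by exists n, m, (~~ b).
exact: (smallest_sub sX cX hA).
Qed.

Theorem proposition3p3 :
  borel_map Fmap /\
  (forall R, in_X R -> in_Y (Fmap R)) /\
  (forall R R', in_X R -> in_X R' ->
     (embeds1 R R' <-> psurj (Fmap R) (Fmap R'))).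
Proof.
split; first exact: borel_Fmap.
split.
  move=> R [Hs [Hi _]]; split=> n m; rewrite /Fmap.
    by rewrite Hs.
  by rewrite Hi.
move=> R R' [Hs [Hi _]] [Hs' [Hi' _]]; split.
- move=> [f [finj fhom]].
  pose h (v : option nat) : option nat :=
    match v with
    | None => None
    | Some n => match pselect (exists a, f a = n) with
                | left e => Some (projT1 (cid e))
                | right _ => None end end.
  exists h; split; first by [].
  split; first by case=> [n|] //= _; case: pselect => //= e; rewrite /Fmap Hi.
  split.
    case=> [u|] [v|] //= _ _; rewrite /h; last by case: pselect.
    case: pselect => [eu|//]; case: pselect => [ev|//] /=.
    case: (cid eu) => a ha; case: (cid ev) => b hb /=.
    rewrite /Fmap; apply: contra => Hab; rewrite -ha -hb; exact: fhom.
  case=> [a|] _; last by exists None.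
  exists (Some (f a)); split; first by rewrite /= /Fmap Hi'.
  rewrite /h; case: pselect => [e|[]]; last by exists a.
  by case: (cid e) => b hb /=; rewrite (finj _ _ hb).
- move=> [h [h0 [hv [hadj hsurj]]]].
  have ex : forall a, exists n, h (Some n) = Some a.
    move=> a; have [v [_ hva]] := hsurj (Some a) ltac:(by rewrite /= /Fmap Hi).
    case: v hva => [n|] hva; first by exists n.
    by rewrite h0 in hva.
  pose f a := projT1 (cid (ex a)).
  have hf : forall a, h (Some (f a)) = Some a by move=> a; rewrite /f; case: cid.
  exists f; split.
    by move=> a b e; have := hf a; rewrite e hf => -[].
  move=> a b Rab; apply: contraT => nR.
  have := hadj (Some (f a)) (Some (f b)).
  rewrite /= /Fmap !Hi' !hf /= Rab; by apply.
Qed.
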